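(* Let $n,\lambda,\mu$ be positive integers with $\mu>\lambda$, and let $\mathcal{A}$ be a path decomposition of $\lambda K_n$. Then $\lambda K_n$ is $1$-extendible with respect to $(\mathcal{A},\mu K_n)$ if and only if $|\mathcal{S}_0(\mathcal{A})|\le(\mu-\lambda)\frac{n(n-1)}{2}$. Moreover, if $\mathcal{A}$ is strong and this inequality holds, then $\lambda K_n$ is strongly $1$-extendible with respect to $(\mathcal{A},\mu K_n)$.
   Context: Graphs may have multiple edges. $\lambda K_n$ is the loopless multigraph on $n$ vertices with every pair of distinct vertices joined by exactly $\lambda$ edges; $\lambda K_n$ is regarded as a subgraph of $\mu K_n$ on the same vertex set, and $\mu K_n\setminus\lambda K_n$ denotes the graph obtained by deleting the edges of $\lambda K_n$. A decomposition of size $k$ of a graph $G$ is an ordered $k$-tuple $(G(1),\dots,G(k))$ of spanning subgraphs of $G$ (colour classes; possibly edgeless) with pairwise disjoint edge sets whose union is $E(G)$. A path decomposition is one in which every colour class is a vertex-disjoint union of paths and cycles (two parallel edges form a cycle of length 2); it is strong if no colour class contains a cycle. $\mathcal{S}_i(\mathcal{A})$ is the set of colour classes of $\mathcal{A}$ with exactly $i$ edges. For a graph $G\subseteq H$, a path decomposition $\mathcal{A}$ of $G$ with $k$ colour classes and a positive integer $\alpha$, $G$ is $\alpha$-extendible with respect to $(\mathcal{A},H)$ if there is a graph $F\subseteq H\setminus G$ and a path decomposition $\mathcal{A}^*$ of $G\cup F$ of size $k$ whose restriction to $G$ is $\mathcal{A}$ (i.e. $\mathcal{A}^*(i)\cap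 E(G)=\mathcal{A}(i)$ for all $i$) and each $\mathcal{A}^*(i)$ has at least $\alpha$ edges; it is strongly $\alpha$-extendible if moreover $\mathcal{A}$ and $\mathcal{A}^*$ are strong path decompositions. *)

(* Defs.v *)
From mathcomp Require Import all_boot.
Set Implicit Arguments. Unset Strict Implicit. Unset Printing Implicit Defensive.

(* Edges of mu K_n on vertex set 'I_n: an edge is (u, v, j) with u < v and
   j < m a label distinguishing the m parallel edges between u and v. *)
Definition Edge (n m : nat) := {e : 'I_n * 'I_n * 'I_m | e.1.1 < e.1.2}.

Section Graphs.
Variables n m : nat.
Local Notation V := 'I_n.
Local Notation E := (Edge n m).

(* lambda K_n as the subgraph of mu K_n (= [set: E] with m = mu)
   consisting of the parallel edges with label < l. *)
Definition lamK (l : nat) : {set E} := [set e : E | (val e).2 < l].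

Definition joins (e : E) (x y : V) : bool :=
  (((val e).1.1 == x) && ((val e).1.2 == y)) ||
  (((val e).1.1 == y) && ((val e).1.2 == x)).

Definition is_path (vs : seq V) (es : seq E) : bool :=
  [&& uniq vs, uniq es, size vs == (size es).+1 &
      all (fun p => joins p.1 p.2.1 p.2.2) (zip es (zip vs (behead vs)))].

(* a cycle (length >= 2; two parallel edges form a cycle of length 2) *)
Definition is_cycle (vs : seq V) (es : seq E) : bool :=
  [&& uniq vs, uniq es, size vs == size es, 2 <= size es &
      all (fun p => joins p.1 p.2.1 p.2.2) (zip es (zip vs (rot 1 vs)))].

Definition path_or_cycle (p : seq V * seq E) : bool :=
  is_path p.1 p.2 || is_cycle p.1 p.2.

(* F is a vertex-disjoint union of paths and cycles
   (isolated vertices are trivial paths and need not be listed) *)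
Definition union_paths_cycles (F : {set E}) : Prop :=
  exists ps : seq (seq V * seq E),
    [/\ perm_eq (flatten (map snd ps)) (enum F),
        all path_or_cycle ps &
        uniq (flatten (map fst ps))].

Definition contains_cycle (F : {set E}) : Prop :=
  exists (vs : seq V) (es : seq E), is_cycle vs es /\ all (fun e => e \in F) es.

Definition is_decomposition (k : nat) (G : {set E}) (A : 'I_k -> {set E}) : Prop :=
  (forall i j : 'I_k, i != j -> [disjoint A i & A j]) /\
  \bigcup_(i < k) A i = G.

Definition path_decomposition (k : nat) (G : {set E}) (A : 'I_k -> {set E}) : Prop :=
  is_decomposition G A /\ forall i, union_paths_cycles (A i).

Definition strong_path_decomposition (k : nat) (G : {set E}) (A : 'I_k -> {set E}) : Prop :=
  path_decomposition G A /\ forall i, ~ contains_cycle (A i).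

Definition S0 (k : nat) (A : 'I_k -> {set E}) : nat := #|[set i : 'I_k | A i == set0]|.

Definition extendible (alpha k : nat) (G H : {set E}) (A : 'I_k -> {set E}) : Prop :=
  exists F : {set E}, F \subset H :\: G /\
    exists A' : 'I_k -> {set E},
      [/\ path_decomposition (G :|: F) A',
          forall i, A' i :&: G = A i &
          forall i, alpha <= #|A' i|].

Definition strongly_extendible (alpha k : nat) (G H : {set E}) (A : 'I_k -> {set E}) : Prop :=
  strong_path_decomposition G A /\
  exists F : {set E}, F \subset H :\: G /\
    exists A' : 'I_k -> {set E},
      [/\ strong_path_decomposition (G :|: F) A',
          forall i, A' i :&: G = A i &
          forall i, alpha <= #|A' i|].
End Graphs.

(* Main.v *)
Require Import Defs.
From mathcomp Require Import all_boot zify.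

Lemma sum_geq (m a : nat) : \sum_(j < m) (a <= j : nat) = m - a.
Proof.
elim: m => [|m IH]; first by rewrite big_ord0.
rewrite big_ord_recr /= IH; case: (leqP a m) => h /=; lia.
Qed.

Lemma card_geq (m a : nat) : #|[set j : 'I_m | a <= j]| = m - a.
Proof.
rewrite -sum1_card -sum_geq big_mkcond /=; apply: eq_bigr => j _.
by rewrite inE; case: (a <= j).
Qed.

Lemma sum_tri (n : nat) : \sum_(u < n) (n - u.+1) = 'C(n, 2).
Proof.
elim: n => [|n IH]; first by rewrite big_ord0.
rewrite big_ord_recl /= binS bin1 -IH subn1 /= addnC; congr (_ + _).
Qed.

Lemma card_lt_pairs (n : nat) :
  #|[set p : 'I_n * 'I_n | p.1 < p.2]| = n * (n - 1) %/ 2.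
Proof.
rewrite divn2 subn1 -bin2 -sum_tri -sum1_card big_mkcond /=.
rewrite (eq_bigr (fun p : 'I_n * 'I_n => (p.1 < p.2 : nat))); last first.
  by move=> p _; rewrite inE; case: (_ < _).
rewrite -(pair_big xpredT xpredT (fun (u v : 'I_n) => (u < v : nat))) /=.
by apply: eq_bigr => u _; rewrite sum_geq.
Qed.

Lemma card_D (n mu lam : nat) :
  #|[set: Edge n mu] :\: lamK n mu lam| = (mu - lam) * (n * (n - 1) %/ 2).
Proof.
rewrite -(card_imset _ val_inj).
have -> : [set val x | x in [set: Edge n mu] :\: lamK n mu lam] =
  setX [set p : 'I_n * 'I_n | p.1 < p.2] [set j : 'I_mu | lam <= j].
  apply/setP => x; rewrite !inE /=; apply/imsetP/andP.
    case=> e; rewrite !inE /= => he ->; split; first exact: (valP e).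
    by move: he; case: ltnP.
  case=> h1 h2; exists (exist _ x h1 : Edge n mu) => //.
  by rewrite !inE /= andbT -leqNgt.
by rewrite cardsX card_lt_pairs card_geq mulnC.
Qed.

Section Single.
Variables n mu : nat.

Lemma single_upc (e : Edge n mu) : union_paths_cycles [set e].
Proof.
have hne : (val e).1.1 != (val e).1.2.
  by apply/eqP => h; move: (valP e); rewrite /= h ltnn.
exists [:: ([:: (val e).1.1; (val e).1.2], [:: e])]; split => /=.
- by rewrite enum_set1.
- by rewrite /path_or_cycle /is_path /= inE hne /joins !eqxx.
- by rewrite /= inE hne.
Qed.

Lemma single_nocycle (e : Edge n mu) : ~ contains_cycle [set e].
Proof.
case=> vs [es [/and5P [_ hu _ hs _] hall]].
case: es hu hs hall => [|a [|b es]] //= hu _ /and3P [ha hb _].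
move: hu; rewrite !inE in ha hb; rewrite (eqP ha) (eqP hb) inE eqxx //.
Qed.
End Single.

Theorem proposition1 (n lam mu k : nat) (A : 'I_k -> {set Edge n mu}) :
  0 < n -> 0 < lam -> lam < mu ->
  path_decomposition (lamK n mu lam) A ->
  (extendible 1 (lamK n mu lam) [set: Edge n mu] A <->
     S0 A <= (mu - lam) * (n * (n - 1) %/ 2)) /\
  (strong_path_decomposition (lamK n mu lam) A ->
     S0 A <= (mu - lam) * (n * (n - 1) %/ 2) ->
     strongly_extendible 1 (lamK n mu lam) [set: Edge n mu] A).
Proof.
move=> _ _ _ hPD.
set G := lamK n mu lam.
set D := [set: Edge n mu] :\: G.
set Z := [set i : 'I_k | A i == set0].
have hsub : forall i, A i \subset G.
  by move=> i; case: hPD => [[_ hU] _]; rewrite /G -hU; exact: (bigcup_sup i).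
have hZ : S0 A = #|Z| by [].
have back : #|Z| <= #|D| -> exists F : {set Edge n mu}, F \subset [set: Edge n mu] :\: G /\
    exists A' : 'I_k -> {set Edge n mu},
      [/\ is_decomposition (G :|: F) A',
          forall i, A' i :&: G = A i,
          forall i, 1 <= #|A' i| &
          forall i, A' i = A i \/ exists e, A' i = [set e]].
  move=> hle.
  case: (set_0Vmem D) => [D0 | [e0 he0]].
    have Z0 : Z = set0 by apply/eqP; rewrite -cards_eq0 -leqn0; move: hle; rewrite D0 cards0.
    exists set0; split; first exact: sub0set.
    exists A; split.
    - by rewrite setU0; case: hPD.
    - by move=> i; apply/setIidPl.
    - move=> i; have : i \notin Z by rewrite Z0 inE.
      by rewrite inE card_gt0.
    - by move=> i; left.
  pose h i := nth e0 (enum D) (index i (enum Z)).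
  have hidx : forall i, i \in Z -> index i (enum Z) < size (enum D).
    move=> i hi; rewrite -cardE; apply: leq_trans hle.
    by rewrite cardE index_mem mem_enum.
  have hD : forall i, i \in Z -> h i \in D.
    by move=> i hi; rewrite -mem_enum; apply: mem_nth; apply: hidx.
  have hG : forall i, i \in Z -> h i \notin G.
    by move=> i /hD; rewrite inE => /andP [].
  have hinj : forall i j, i \in Z -> j \in Z -> h i = h j -> i = j.
    move=> i j hi hj /eqP; rewrite /h nth_uniq ?hidx ?enum_uniq // => /eqP e.
    have := congr1 (nth i (enum Z)) e; rewrite !nth_index ?mem_enum //.
  have hA0 : forall i, i \in Z -> A i = set0 by move=> i; rewrite inE => /eqP.
  exists [set h i | i in Z]; split.
    by apply/subsetP => x /imsetP [i hi ->]; apply: hD.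
  exists (fun i => if i \in Z then [set h i] else A i); split.
  - split.
      move=> i j hij /=.
      case hi: (i \in Z); case hj: (j \in Z).
      + rewrite disjoints1 inE; apply/eqP => e; move/eqP: hij; apply; exact: hinj hi hj e.
      + rewrite disjoints1; apply: contra (hG i hi); exact: (subsetP (hsub j)).
      + rewrite disjoint_sym disjoints1; apply: contra (hG j hj); exact: (subsetP (hsub i)).
      + by case: hPD => [[hd _] _]; apply: hd.
    apply/setP => e; apply/bigcupP/setUP.
      case=> i _; case: ifP => hi.
        by rewrite inE => /eqP ->; right; apply: imset_f.
      by move=> he; left; apply: (subsetP (hsub i)).
    case=> [eG | /imsetP [i hi ->]].
      have : e \in \bigcup_(i < k) A i by case: hPD => [[_ ->] _].
      case/bigcupP=> i _ ei; exists i => //.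
      case: ifP => hi //; by rewrite hA0 // inE in ei.
    by exists i => //; rewrite hi inE.
  - move=> i; case: ifP => hi; last by apply/setIidPl.
    by rewrite hA0 //; apply/eqP; rewrite setI_eq0 disjoints1 hG.
  - by move=> i; case: ifP => hi; rewrite ?cards1 // card_gt0; move: hi; rewrite inE => ->.
  - move=> i; case: ifP => hi; [right; by exists (h i) | by left].
split; [split|].
- move=> [F [hF [A' [[[hdisj hU] _] hI hc]]]].
  rewrite hZ -card_D; apply: leq_trans (subset_leq_card hF).
  pose q i := [pick e in A' i].
  have hq : forall i, i \in Z -> exists e, q i = Some e /\ e \in A' i.
    move=> i _; rewrite /q; case: pickP => [e he|h0]; first by exists e.
    by have := hc i; rewrite card_gt0 => /set0Pn [e he]; move: (h0 e); rewrite he.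
  have -> : #|Z| = #|q @: Z|.
    rewrite card_in_imset // => i j hi hj.
    have [e [qi ei]] := hq i hi; have [e' [qj ej]] := hq j hj.
    rewrite qi qj => -[ee]; subst e'.
    apply/eqP; apply: contraT => hne.
    by rewrite (disjointFr (hdisj _ _ hne) ei) in ej.
  apply: (@leq_trans #|[set Some e | e in F]|); last by rewrite card_imset //; exact: Some_inj.
  apply: subset_leq_card; apply/subsetP => x /imsetP [i hi ->].
  have [e [qi ei]] := hq i hi; rewrite qi; apply: imset_f.
  have : e \in G :|: F by rewrite -hU; apply/bigcupP; exists i.
  case/setUP => [eG|] //.
  have : e \in A' i :&: G by rewrite inE ei eG.
  by rewrite hI; move: hi; rewrite inE => /eqP ->; rewrite inE.
- move=> hle; rewrite hZ -card_D in hle.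
  have [F [hF [A' [hd hI hc hA']]]] := back hle.
  exists F; split => //; exists A'; split => //; split => // i.
  by case: (hA' i) => [-> | [e ->]]; [case: hPD | apply: single_upc].
- move=> hS hle; rewrite hZ -card_D in hle; split => //.
  have [F [hF [A' [hd hI hc hA']]]] := back hle.
  exists F; split => //; exists A'; split => //; split => //.
    split => // i.
    by case: (hA' i) => [-> | [e ->]]; [case: hPD | apply: single_upc].
  move=> i.
  by case: (hA' i) => [-> | [e ->]]; [case: hS | apply: single_nocycle].
Qed.
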